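(* Let $d\ge1$ and let $f(t)=1+\sum_{i=1}^{d}\binom{x_i}{i}t^{i}$ be a polynomial of degree $d$ with positive real coefficients, where $x_i\ge i-1$ are real numbers, and suppose $x_d\ge d$. If all roots of $f(t)$ are real, then $x_1\ge x_2\ge\cdots\ge x_d$.
   Context: For real $x$ and integer $k\ge0$, $\binom{x}{k}=\frac{x(x-1)\cdots(x-k+1)}{k!}$; for each $k\ge1$ and real $y>0$ there is a unique real $x\ge k-1$ with $\binom{x}{k}=y$. *)

(* Defs.v *)
From mathcomp Require Import all_boot all_order all_algebra.
Set Implicit Arguments. Unset Strict Implicit. Unset Printing Implicit Defensive.
Import Order.TTheory GRing.Theory Num.Theory.
Local Open Scope ring_scope.

Definition binomR {R : realFieldType} (x : R) (k : nat) : R :=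
  (\prod_(j < k) (x - j%:R)) / (k`!)%:R.

Definition fpoly {R : realFieldType} (d : nat) (x : nat -> R) : {poly R} :=
  1 + \sum_(1 <= i < d.+1) binomR (x i) i *: 'X^i.

Definition real_rooted {R : realFieldType} (p : {poly R}) : Prop :=
  exists rs : seq R, p = lead_coef p *: \prod_(r <- rs) ('X - r%:P).

(* Main.v *)
Require Import Defs.
From mathcomp Require Import all_boot all_order all_algebra.
From mathcomp Require Import reals.
From mathcomp Require Import ring lra.
Import Order.TTheory GRing.Theory Num.Theory.
Local Open Scope ring_scope.
Lemma step_ineq (R : realFieldType) (k u A B C D r : R) :
  1 <= k -> 1 <= u -> 0 <= A -> 0 < B -> 0 < C -> 0 <= D -> 0 <= r ->
  k * (u + 1) * A * C <= (k - 1) * u * B ^+ 2 ->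
  (k + 1) * u * B * D <= k * (u - 1) * C ^+ 2 ->
  (k + 1) * (u + 1) * (A + r * B) * (C + r * D) <= k * u * (B + r * C) ^+ 2.
Proof.
move=> hk hu hA hB hC hD hr H1 H2.
have E1 : u * B ^+ 2 <= k * (k * u * B ^+ 2 - (k + 1) * (u + 1) * A * C).
  have : (k + 1) * (k * (u + 1) * A * C) <= (k+1) * ((k - 1) * u * B ^+ 2).
    by rewrite ler_pM2l; lra.
  nra.
have E2 : k * C ^+ 2 <= u * (k * u * C ^+ 2 - (k + 1) * (u + 1) * B * D).
  have : (u + 1) * ((k + 1) * u * B * D) <= (u+1) * (k * (u - 1) * C ^+ 2).
    by rewrite ler_pM2l; lra.
  nra.
have E3 : (k + 1) * (u + 1) * A * D <= (k - 1) * (u - 1) * B * C.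
  have hAC : 0 <= k * (u + 1) * A * C by apply: mulr_ge0; [apply: mulr_ge0; [apply: mulr_ge0|]|]; lra.
  have hBD : 0 <= (k + 1) * u * B * D by apply: mulr_ge0; [apply: mulr_ge0; [apply: mulr_ge0|]|]; lra.
  have := ler_pM hAC hBD H1 H2.
  have hkuBC : 0 < k * u * B * C by apply: mulr_gt0; [apply: mulr_gt0; [apply: mulr_gt0|]|]; lra.
  move=> H.
  have : (k * u * B * C) * ((k + 1) * (u + 1) * A * D) <= (k * u * B * C) * ((k - 1) * (u - 1) * B * C).
    rewrite -subr_ge0. rewrite -subr_ge0 in H. 
    have -> : k * u * B * C * ((k - 1) * (u - 1) * B * C) - k * u * B * C * ((k + 1) * (u + 1) * A * D)
      = (k - 1) * u * B ^+ 2 * (k * (u - 1) * C ^+ 2) - k * (u + 1) * A * C * ((k + 1) * u * B * D) by ring.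
    exact: H.
  by rewrite ler_pM2l.
set X0 := k * u * B ^+ 2 - (k + 1) * (u + 1) * A * C in E1.
set X2 := k * u * C ^+ 2 - (k + 1) * (u + 1) * B * D in E2.
have key : 0 <= X0 - 2 * r * B * C + r ^+ 2 * X2.
  have hku : 0 < k * u by nra.
  rewrite -(pmulr_rge0 _ hku).
  have : 0 <= (u * B - k * r * C) ^+ 2 by apply: sqr_ge0.
  have : k * r^+2 * (k * C ^+ 2) <= k * r^+2 * (u * X2).
    apply: ler_wpM2l => //; nra.
  have : u * (u * B ^+ 2) <= u * (k * X0). by apply: ler_wpM2l; lra.
  nra.
have hrBC : 0 <= r * ((k - 1) * (u - 1) * B * C - (k + 1) * (u + 1) * A * D) by nra.
rewrite -subr_ge0.
have -> : k * u * (B + r * C) ^+ 2 - (k + 1) * (u + 1) * (A + r * B) * (C + r * D) =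
  (X0 - 2 * r * B * C + r ^+ 2 * X2) + r * ((k - 1) * (u - 1) * B * C - (k + 1) * (u + 1) * A * D) by rewrite /X0 /X2; ring.
lra.
Qed.

Lemma coef_XsubCM (R : ringType) (r : R) (q : {poly R}) j :
  (('X - r%:P) * q)`_j = (if j == 0%N then 0 else q`_j.-1) - r * q`_j.
Proof. by rewrite mulrBl coefB coefXM coefCM. Qed.

Lemma prod_newton (R : realFieldType) (s : seq R) : all (fun r => r < 0) s ->
  let q := \prod_(r <- s) ('X - r%:P) in
  (forall j, (j <= size s)%N -> 0 < q`_j) /\ (forall j, (size s < j)%N -> q`_j = 0) /\
  (forall k, (1 <= k <= size s)%N ->
     (k.+1)%:R * ((size s)%:R - k%:R + 1) * q`_k.-1 * q`_k.+1
       <= k%:R * ((size s)%:R - k%:R) * q`_k ^+ 2).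
Proof.
elim: s => [_|r0 s IH] /=.
  rewrite big_nil; split; last split.
  - by case=> // _; rewrite coef1 ltr01.
  - by case=> // j _; rewrite coef1.
  - by case.
case/andP=> hr0 /IH [Hpos [Hz Hn]].
rewrite big_cons.
set q := \prod_(r <- s) ('X - r%:P).
set m := size s.
have Hge : forall j, 0 <= q`_j.
  move=> j; case: (leqP j m) => hj; first exact/ltW/Hpos.
  by rewrite Hz.
split; last split.
- case=> [_|j hj]; rewrite coef_XsubCM /=.
    by rewrite sub0r -mulNr; apply: mulr_gt0; [lra| exact: Hpos].
  have := Hpos j hj; have := Hge j.+1; nra.
- case=> // j hj; rewrite coef_XsubCM /= !Hz //; first by rewrite mulr0 subr0.
  by apply: ltn_trans hj.
move=> k /andP [hk1 hkm].
case: (ltnP m k) => hmk.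
  have hk : k = m.+1 by apply/eqP; rewrite eqn_leq hkm.
  have h1 : (m < k.+1)%N by apply: ltnW.
  have h2 : (m < k)%N by [].
  rewrite [(_ * q)`_k.+1]coef_XsubCM /= (Hz _ h1) (Hz _ h2) mulr0 subr0 mulr0.
  rewrite hk -natr1; have -> : (m%:R + 1 - (m%:R + 1)) = 0 :> R by ring.
  by rewrite mulr0 mul0r.
case: k hk1 hkm hmk => // k' _ hkm hmk.
have hB : 0 < q`_k' by apply: Hpos; apply: ltnW.
have hC : 0 < q`_k'.+1 by apply: Hpos.
have hD : 0 <= q`_k'.+2 by apply: Hge.
set A := if k' == 0%N then 0 else q`_k'.-1.
have hA : 0 <= A by rewrite /A; case: ifP => // _; apply: Hge.
have eA : (('X - r0%:P) * q)`_k'.+1.-1 = A - r0 * q`_k' by rewrite coef_XsubCM.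
have eB : (('X - r0%:P) * q)`_k'.+1 = q`_k' - r0 * q`_k'.+1 by rewrite coef_XsubCM.
have eC : (('X - r0%:P) * q)`_k'.+2 = q`_k'.+1 - r0 * q`_k'.+2 by rewrite coef_XsubCM.
rewrite eA eB eC.
have hkmR : (k'.+1)%:R <= m%:R :> R by rewrite ler_nat.
have H2 := Hn k'.+1 hmk.
have H1 : k'.+1%:R * (m%:R - k'.+1%:R + 1 + 1) * A * q`_k'.+1 <=
          (k'.+1%:R - 1) * (m%:R - k'.+1%:R + 1) * q`_k' ^+ 2.
  rewrite /A; case: k' hkm hmk hB hC hD A hA eA eB eC hkmR H2 => [|k''] hkm hmk hB hC hD A hA eA eB eC hkmR H2 /=.
    by rewrite mulr0 mul0r subrr mul0r mul0r.
  have := Hn k''.+1 (ltnW hmk).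
  rewrite -!natr1 /=; move=> H; move: H; congr (_ <= _); ring.
have S := @step_ineq R (k'.+1%:R) (m%:R - k'.+1%:R + 1) A _ _ _ (- r0) _ _ hA hB hC hD _ H1.
rewrite -!natr1 in S H2 *.
have h0 : 0 <= k'%:R :> R := ler0n _ _.
have S' := S ltac:(lra) ltac:(lra) ltac:(lra) ltac:(move: H2; congr (_ <= _); ring).
move: S'; congr (_ <= _); ring.
Qed.
Lemma binomR0 (R : realFieldType) (y : R) : binomR y 0 = 1.
Proof. by rewrite /binomR big_ord0 fact0 divr1. Qed.

Lemma binomR_S (R : realFieldType) (y : R) k :
  binomR y k.+1 = binomR y k * (y - k%:R) / k.+1%:R.
Proof.
rewrite /binomR big_ord_recr /= factS natrM.
have h1 : (k.+1)%:R != 0 :> R by rewrite pnatr_eq0.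
have h2 : (k`!)%:R != 0 :> R by rewrite pnatr_eq0 -lt0n fact_gt0.
by field; rewrite h2 andbT addrC natr1.
Qed.

Fixpoint gseq {R : realFieldType} (lam dR : R) (k : nat) : R :=
  match k with 0 => 1 | k'.+1 => gseq lam dR k' * lam * (dR - k'%:R) / k'.+1%:R end.

Lemma key (R : realFieldType) (d i : nat) (a : nat -> R) (y : R) :
  (1 <= i)%N -> (i < d)%N -> a 0%N = 1 -> (forall k, (k <= d)%N -> 0 < a k) ->
  (forall k, (1 <= k < d)%N ->
     k.+1%:R * (d%:R - k%:R + 1) * a k.-1 * a k.+1 <= k%:R * (d%:R - k%:R) * a k ^+ 2) ->
  d%:R <= y -> a i.+1 = binomR y i.+1 -> a i < binomR y i -> False.
Proof.
move=> hi1 hid ha0 hapos Hn hy eai1 hai.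
have hidR : i%:R < d%:R :> R by rewrite ltr_nat.
set lam := (y - i%:R) / (d%:R - i%:R).
have hlam : 0 < lam by apply: divr_gt0; lra.
set g := gseq lam d%:R.
have gpos : forall k, (k <= d)%N -> 0 < g k.
  elim=> [|k IH] hk /=; first exact: ltr01.
  have hkR : k%:R < d%:R :> R by rewrite ltr_nat.
  apply: divr_gt0; last by rewrite ltr0n.
  apply: mulr_gt0; [apply: mulr_gt0 => //; apply: IH; exact: ltnW | lra].
have gid : forall j, (j.+2)%:R * (d%:R - j.+1%:R + 1) * g j * g j.+2 =
                     j.+1%:R * (d%:R - j.+1%:R) * g j.+1 ^+ 2.
  move=> j; rewrite /g /=.
  have h1 : (j.+1)%:R != 0 :> R by rewrite pnatr_eq0.
  have h2 : (j.+2)%:R != 0 :> R by rewrite pnatr_eq0.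
  rewrite -[j.+2%:R]natr1 -[j.+1%:R]natr1 in h2 *. rewrite -[j.+1%:R]natr1 in h1.
  by field; rewrite h1 h2.
set s := fun k => a k / g k.
have spos : forall k, (k <= d)%N -> 0 < s k.
  by move=> k hk; apply: divr_gt0; [apply: hapos | apply: gpos].
have aE : forall k, (k <= d)%N -> a k = s k * g k.
  by move=> k hk; rewrite /s divfK //; apply: lt0r_neq0; apply: gpos.
have lc : forall k, (1 <= k < d)%N -> s k.-1 * s k.+1 <= s k ^+ 2.
  case=> // j /andP [_ hj].
  have hj2 : (j.+2 <= d)%N by [].
  have hj1 : (j.+1 <= d)%N by apply: ltnW.
  have hj0 : (j <= d)%N by apply: ltnW.
  have := Hn j.+1 hj; rewrite /= (aE j hj0) (aE _ hj1) (aE _ hj2).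
  have hP : 0 < j.+1%:R * (d%:R - j.+1%:R) * g j.+1 ^+ 2 :> R.
    have : j.+1%:R < d%:R :> R by rewrite ltr_nat.
    move=> hh; apply: mulr_gt0; last by apply: exprn_gt0; apply: gpos; exact: ltnW.
    apply: mulr_gt0; [by rewrite ltr0n | lra].
  have E1 : j.+1.+1%:R * (d%:R - j.+1%:R + 1) * (s j * g j) * (s j.+2 * g j.+2)
     = (j.+1%:R * (d%:R - j.+1%:R) * g j.+1 ^+ 2) * (s j * s j.+2).
    by rewrite -gid; ring.
  have E2 : j.+1%:R * (d%:R - j.+1%:R) * (s j.+1 * g j.+1) ^+ 2
     = (j.+1%:R * (d%:R - j.+1%:R) * g j.+1 ^+ 2) * s j.+1 ^+ 2 by ring.
  by rewrite E1 E2 ler_pM2l.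
have cg : forall k, (k <= i)%N -> 0 <= binomR y k <= g k.
  elim=> [|k IH] hk; first by rewrite binomR0 /g /= lexx ler01.
  have hkR : k%:R < i%:R :> R by rewrite ltr_nat.
  have /andP [c0 cle] := IH (ltnW hk).
  have hl : y - k%:R <= lam * (d%:R - k%:R).
    rewrite /lam mulrAC ler_pdivlMr; [nra | lra].
  have hk1 : 0 < (k.+1)%:R :> R by rewrite ltr0n.
  rewrite binomR_S /g /= -/g; apply/andP; split.
    by apply: divr_ge0; [apply: mulr_ge0; lra | lra].
  rewrite ler_pM2r ?invr_gt0 // -mulrA; apply: ler_pM => //; lra.
have sI : s i < s i.+1.
  have hlam2 : lam * (d%:R - i%:R) = y - i%:R.
    by rewrite /lam divfK //; apply: lt0r_neq0; lra.
  have hgi := gpos i (ltnW hid).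
  have hci : s i.+1 = binomR y i / g i.
    rewrite /s eai1 binomR_S /g /= -/g -(mulrA (g i)) hlam2.
    have h1 : (i.+1)%:R != 0 :> R by rewrite pnatr_eq0.
    have h2 : y - i%:R != 0 by apply: lt0r_neq0; lra.
    by field; rewrite addrC natr1 h1 h2 (lt0r_neq0 hgi).
  by rewrite hci /s ltr_pM2r // invr_gt0.
have down : forall t, (t <= i)%N -> s (i - t)%N < s (i - t).+1.
  elim=> [|t IH] ht; first by rewrite subn0.
  have IH' := IH (ltnW ht).
  have hk : (0 < i - t)%N by rewrite subn_gt0.
  have hkd : (i - t < d)%N by apply: leq_ltn_trans hid; apply: leq_subr.
  have := lc (i - t)%N; rewrite hk hkd => /(_ isT) H.
  have hp : 0 < s (i - t).-1 by apply: spos; apply: leq_trans (ltnW hkd); apply: leq_pred.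
  rewrite subnS prednK //.
  move: IH' H hp hk hkd; set k := (i - t)%N => IH' H hp hk hkd.
  have H2 : s k.-1 * s k < s k.-1 * s k.+1 by rewrite ltr_pM2l.
  have H3 : s k.-1 * s k < s k * s k by rewrite -expr2; lra.
  by rewrite ltr_pM2r in H3; [exact: H3 | apply: spos; apply: ltnW].
have up : forall j, (j < i)%N -> s 0%N < s j.+1.
  elim=> [|j IH] hj; first by have := down i (leqnn i); rewrite subnn.
  have := down (i - j.+1)%N (leq_subr _ _); rewrite subKn ?(ltnW hj) // => H.
  have := IH (ltnW hj); lra.
have s0 : s 0%N = 1 by rewrite /s ha0 /g /= divr1.
have hpi : (i.-1 < i)%N by rewrite ltn_predL.
have := up i.-1 hpi; rewrite prednK // => hsi.
rewrite s0 /s ltr_pdivlMr ?mul1r in hsi; last exact: gpos (ltnW hid).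
have /andP [_ hc] := cg i (leqnn i).
lra.
Qed.

Lemma coef_sumX (R : realFieldType) (c : nat -> R) n j :
  (\sum_(1 <= i < n) c i *: 'X^i)`_j = if (1 <= j < n)%N then c j else 0.
Proof.
elim: n => [|n IH]; first by rewrite big_geq // coef0; case: j.
case: n IH => [|n] IH; first by clear IH; rewrite big_geq // coef0; case: j => [|[]].
rewrite big_nat_recr //= coefD IH coefZ coefXn.
case: (ltngtP j n.+1) => h.
- by rewrite andbT mulr0 addr0 ltnS (ltnW h) andbT.
- by rewrite andbF mulr0 addr0 ltnS (leqNgt j) h andbF.
- by rewrite h /= mulr1 add0r ltnSn.
Qed.

Theorem mainTheorem3 (R : realType) (d : nat) (x : nat -> R)
  (hd : (1 <= d)%N)
  (hx : forall i : nat, (1 <= i <= d)%N -> (i%:R - 1) <= x i)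
  (hpos : forall i : nat, (1 <= i <= d)%N -> 0 < binomR (x i) i)
  (hxd : d%:R <= x d)
  (hreal : real_rooted (fpoly d x)) :
  forall i : nat, (1 <= i < d)%N -> x i.+1 <= x i.
Proof.
set p := fpoly d x.
have pE : forall k, p`_k = (k == 0%N)%:R + (if (1 <= k < d.+1)%N then binomR (x k) k else 0).
  by move=> k; rewrite /p /fpoly coefD coef1 coef_sumX.
have pa0 : p`_0 = 1 by rewrite pE /= addr0.
have paI : forall k, (1 <= k <= d)%N -> p`_k = binomR (x k) k.
  by move=> k /andP [h1 h2]; rewrite pE h1 ltnS h2 /=; case: k h1 {h2} => // k _; rewrite add0r.
have paZ : forall k, (d < k)%N -> p`_k = 0.
  move=> k hk; rewrite pE ltnS (leqNgt k) hk andbF addr0.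
  by case: k hk.
have apos : forall k, (k <= d)%N -> 0 < p`_k.
  case=> [|k] hk; first by rewrite pa0 ltr01.
  by rewrite paI //; apply: hpos.
have peval : forall t, 0 <= t -> 1 <= p.[t].
  move=> t ht; have h1t : (1:{poly R}).[t] = 1 by rewrite -polyC1 hornerC.
  rewrite /p /fpoly hornerD h1t horner_sum lerDl big_nat_cond.
  apply: sumr_ge0 => i /andP [/andP [hi1 hi2] _].
  rewrite hornerZ hornerXn; apply: mulr_ge0; last exact: exprn_ge0.
  by apply/ltW/hpos; rewrite hi1 -ltnS.
case: hreal => rs hp; rewrite -/p in hp.
set lc := lead_coef p in hp.
set q := \prod_(r <- rs) ('X - r%:P) in hp.
have pq : forall k, p`_k = lc * q`_k by move=> k; rewrite [in LHS]hp coefZ.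
have hneg : all (fun r => r < 0) rs.
  apply/allP => r hr; rewrite ltNge; apply/negP => hr0.
  have hq : q.[r] = 0 by apply/rootP; rewrite root_prod_XsubC.
  have := peval r hr0; rewrite hp hornerZ hq mulr0; lra.
have [Hpos [Hz Hn]] := @prod_newton R rs hneg.
rewrite -/q in Hpos Hz Hn.
have lc0 : lc != 0 by apply/eqP => h; move: pa0; rewrite pq h mul0r => /eqP; rewrite eq_sym oner_eq0.
have hnd : size rs = d.
  apply/eqP; rewrite eqn_leq; apply/andP; split.
    rewrite leqNgt; apply/negP => h; have := apos _ (leqnn d).
    rewrite leqNgt in h.
    have := pq (size rs); rewrite paZ ?ltnNge //.
    move=> /esym/eqP; rewrite mulf_eq0 (negbTE lc0) /= => /eqP h2.
    by have := Hpos _ (leqnn _); rewrite h2 ltxx.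
  rewrite leqNgt; apply/negP => h.
  have := apos _ (leqnn d); rewrite pq Hz // mulr0 ltxx //.
rewrite hnd in Hpos Hz Hn.
have Newt : forall k, (1 <= k < d)%N ->
   k.+1%:R * (d%:R - k%:R + 1) * p`_k.-1 * p`_k.+1 <= k%:R * (d%:R - k%:R) * p`_k ^+ 2.
  move=> k /andP [h1 h2].
  have := Hn k; rewrite h1 (ltnW h2) => /(_ isT) H.
  rewrite !pq.
  have E1 : k.+1%:R * (d%:R - k%:R + 1) * (lc * q`_k.-1) * (lc * q`_k.+1)
     = lc ^+ 2 * (k.+1%:R * (d%:R - k%:R + 1) * q`_k.-1 * q`_k.+1) by ring.
  have E2 : k%:R * (d%:R - k%:R) * (lc * q`_k) ^+ 2
     = lc ^+ 2 * (k%:R * (d%:R - k%:R) * q`_k ^+ 2) by ring.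
  by rewrite E1 E2; apply: ler_wpM2l => //; apply: sqr_ge0.
have KL : forall i, (1 <= i < d)%N -> d%:R <= x i.+1 -> x i.+1 <= x i.
  move=> i /andP [hi1 hid] hy; rewrite leNgt; apply/negP => hlt.
  apply: (@key R d i (fun k => p`_k) (x i.+1) hi1 hid pa0 apos Newt hy).
    by rewrite paI // hid.
  rewrite paI ?hi1 ?(ltnW hid) //.
  rewrite /binomR ltr_pM2r; last by rewrite invr_gt0 ltr0n fact_gt0.
  rewrite -!(big_mkord xpredT (fun j => _ - j%:R)).
  apply: ltr_prod_nat => // j /andP [_ hj].
  have := hx i; rewrite hi1 (ltnW hid) => /(_ isT) hxi.
  have : j%:R + 1 <= i%:R :> R by rewrite natr1 ler_nat.
  lra.
have down : forall t, (t < d)%N -> d%:R <= x (d - t)%N.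
  elim=> [|t IH] ht; first by rewrite subn0.
  have hdt : (d - t.+1).+1 = (d - t)%N by rewrite subnS prednK // subn_gt0 ltnW.
  have := KL (d - t.+1)%N; rewrite hdt => H.
  have := IH (ltnW ht) => H2; apply: le_trans H2 (H _ H2).
  by rewrite subn_gt0 ht leq_subr.
move=> i /andP [hi1 hid]; apply: KL; first by rewrite hi1.
have := down (d - i.+1)%N; rewrite subKn // => H; apply: H.
by rewrite ltn_subrL hd andbT.
Qed.
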